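(* Let $G$ be a $P_5$-free graph. If $(a,b,c,d)$ is an induced path $P_4$ in $G$ (with edges $ab,bc,cd$), then neither $b$ nor $c$ belongs to any efficient dominating set of $G$.
   Context: All graphs are finite, undirected and simple. A vertex dominates itself and all its neighbors. A vertex set $D$ of $G$ is an efficient dominating set if every vertex of $G$ is dominated by exactly one vertex of $D$. $P_k$ denotes the chordless path on $k$ vertices; $P_5$-free means no induced subgraph isomorphic to $P_5$. *)

(* Defs.v *)
From mathcomp Require Import all_boot.
Set Implicit Arguments. Unset Strict Implicit. Unset Printing Implicit Defensive.

Definition simple_graph (T : finType) (e : rel T) : Prop :=
  symmetric e /\ irreflexive e.

Definition dominates (T : finType) (e : rel T) (d v : T) : bool :=
  (d == v) || e d v.

Definition efficient_dom (T : finType) (e : rel T) (D : {set T}) : Prop :=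
  forall v : T, #|[set d in D | dominates e d v]| = 1.

Definition induced_path (T : finType) (e : rel T) (p : seq T) : Prop :=
  uniq p /\
  forall i j, i < size p -> j < size p ->
    forall x0 : T, e (nth x0 p i) (nth x0 p j) = ((i.+1 == j) || (j.+1 == i)).

Definition Pk_free (T : finType) (e : rel T) (k : nat) : Prop :=
  ~ exists p : seq T, size p = k /\ induced_path e p.

(* Main.v *)
Require Import Defs.
From mathcomp Require Import all_boot.

Lemma ed_uniq {T : finType} (e : rel T) (D : {set T}) (v x y : T) :
  efficient_dom e D -> x \in D -> y \in D -> dominates e x v -> dominates e y v -> x = y.
Proof.
move=> /(_ v) /eqP /cards1P [z Hz] xD yD hx hy.
have: x \in [set d in D | dominates e d v] by rewrite inE xD hx.
have: y \in [set d in D | dominates e d v] by rewrite inE yD hy.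
by rewrite Hz !inE => /eqP -> /eqP ->.
Qed.

Lemma ed_ex {T : finType} (e : rel T) (D : {set T}) (v : T) :
  efficient_dom e D -> exists x, x \in D /\ dominates e x v.
Proof.
move=> /(_ v) /eqP /cards1P [z Hz].
have: z \in [set d in D | dominates e d v] by rewrite Hz inE.
by rewrite inE => /andP [] ? ?; exists z.
Qed.

Lemma key (T : finType) (e : rel T) (a b c d : T) (D : {set T}) :
  simple_graph e -> Pk_free e 5 -> efficient_dom e D ->
  a != b -> a != c -> a != d -> b != c -> b != d -> c != d ->
  e a b -> e b c -> e c d -> ~~ e a c -> ~~ e a d -> ~~ e b d ->
  b \notin D.
Proof.
move=> [sy ir] P5 ED ab ac ad bc bd cd eab ebc ecd eac ead ebd.
apply/negP => bD.
have domb u : u != b -> dominates e b u -> u \in D -> False.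
  move=> ub h uD. have := ed_uniq e D u _ _ ED bD uD h. rewrite /dominates eqxx => /(_ isT) E.
  by move: ub; rewrite E eqxx.
have aD : a \notin D.
  apply/negP; apply: (domb a) => //. by rewrite /dominates sy eab orbT.
have cD : c \notin D.
  apply/negP; apply: (domb c); first by rewrite eq_sym.
  by rewrite /dominates ebc orbT.
have dD : d \notin D.
  apply/negP => dD.
  have := ed_uniq e D c _ _ ED bD dD.
  rewrite /dominates ebc sy ecd !orbT => /(_ isT isT) E.
  by move: bd; rewrite E eqxx.
have [x [xD hx]] := ed_ex e D d ED.
have xd : x != d by apply/eqP => E; move: xD; rewrite E (negbTE dD).
have exd : e x d by move: hx; rewrite /dominates (negbTE xd).
have xa : x != a by apply/eqP => E; move: xD; rewrite E (negbTE aD).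
have xc : x != c by apply/eqP => E; move: xD; rewrite E (negbTE cD).
have xb : x != b by apply/eqP => E; move: exd; rewrite E (negbTE ebd).
have exc : ~~ e x c.
  apply/negP => h. have := ed_uniq e D c _ _ ED bD xD.
  rewrite /dominates ebc h !orbT => /(_ isT isT) E. by move: xb; rewrite E eqxx.
have exb : ~~ e x b.
  apply/negP => h. have := ed_uniq e D b _ _ ED bD xD.
  rewrite /dominates h eqxx orbT => /(_ isT isT) E. by move: xb; rewrite E eqxx.
have exa : ~~ e x a.
  apply/negP => h. have := ed_uniq e D a _ _ ED bD xD.
  rewrite /dominates h (sy b a) eab !orbT => /(_ isT isT) E. by move: xb; rewrite E eqxx.
apply: P5; exists [:: a; b; c; d; x]; split => //; split.
  rewrite /= !inE !negb_or ab ac ad bc bd cd /=.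
  by rewrite !(eq_sym _ x) xa xb xc xd.
move=> i j hi hj x0.
have F u v : e u v = e v u := sy u v.
case: i hi => [|[|[|[|[|i]]]]] hi //; case: j hj => [|[|[|[|[|j]]]]] hj //=;
  rewrite ?ir ?eab ?ebc ?ecd ?exd ?(F b a) ?(F c b) ?(F d c) ?(F d x)
    ?(negbTE eac) ?(negbTE ead) ?(negbTE ebd) ?(negbTE exc) ?(negbTE exb) ?(negbTE exa)
    ?(F c a) ?(F d a) ?(F d b) ?(F c x) ?(F b x) ?(F a x)
    ?(negbTE eac) ?(negbTE ead) ?(negbTE ebd) ?(negbTE exc) ?(negbTE exb) ?(negbTE exa)
    ?eab ?ebc ?ecd ?exd //.
Qed.

Theorem proposition1 (T : finType) (e : rel T) :
  simple_graph e -> Pk_free e 5 ->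
  forall a b c d : T, induced_path e [:: a; b; c; d] ->
  forall D : {set T}, efficient_dom e D -> b \notin D /\ c \notin D.
Proof.
move=> G P5 a b c d [U H] D ED.
have [sy ir] := G.
move: U; rewrite /= !inE !negb_or => /andP [/and3P [ab ac ad] /andP [/andP [bc bd] /andP [cd _]]].
have h01 := H 0 1 isT isT a; have h12 := H 1 2 isT isT a; have h23 := H 2 3 isT isT a.
have h02 := H 0 2 isT isT a; have h03 := H 0 3 isT isT a; have h13 := H 1 3 isT isT a.
simpl in *.
split.
  apply: (@key T e a b c d D G P5 ED) => //; by rewrite ?h01 ?h12 ?h23 ?h02 ?h03 ?h13.
apply: (@key T e d c b a D G P5 ED);
  rewrite ?(eq_sym d) ?(eq_sym c) ?(eq_sym b) //.
all: try by rewrite sy ?h01 ?h12 ?h23 ?h02 ?h03 ?h13.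
all: try by rewrite ?h01 ?h12 ?h23 ?h02 ?h03 ?h13.
all: try by rewrite eq_sym.
Show.
Qed.
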